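(* In the situation of a path coalescing transformation, suppose in addition that $H$ is sub-additive, i.e. $H(A\cup B)\le H(A)+H(B)$ for all disjoint nonempty $A,B\subseteq X$. Then $\mathcal H(P')\le\mathcal H(P)$.
   Context: $X$ is a finite set and $H$ a real-valued function on nonempty subsets of $X$; write $H(a)=H(\{a\})$, $H(a,b)=H(\{a,b\})$; elements $a,b$ are combinatorially dependent if $H(a,b)<H(a)+H(b)$, independent otherwise. $G(X)$ is the complete undirected graph on $X$. A tour $P$ is a Hamiltonian cycle of $G(X)$ given as a directed cyclic sequence of all elements of $X$. $\mathcal S(P)$ is the set of maximal subpaths obtained by deleting from $P$ every edge whose endpoints are combinatorially independent; their vertex sets partition $X$, and $\mathcal H(P)=\sum_{Q\in\mathcal S(P)}H(V(Q))$, where $V(Q)$ is the vertex set of $Q$. A path coalescing transformation: $P_i=(u_0,\dots,u_k)$ and $P_j=(v_0,\dots,v_\ell)$ are distinct paths of $\mathcal S(P)$ with $u_k,v_0$ combinatorially dependent; $x$ is the successor of $u_k$ in $P$, $y$ the predecessor of $v_0$, $z$ the successor of $v_\ell$; $P'$ is a tour whose edge multiset is that of $P$ with $\{u_k,x\},\{y,v_0\},\{v_\ell,z\}$ replaced by $\{u_k,v_0\},\{v_\ell,x\},\{y,z\}$. *)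

(* Defs.v *)
From HB Require Import structures.
From mathcomp Require Import all_boot all_order all_algebra.
Set Implicit Arguments. Unset Strict Implicit. Unset Printing Implicit Defensive.
Import Order.TTheory GRing.Theory Num.Theory.
Local Open Scope ring_scope.

Section Defs.
Variables (R : realFieldType) (X : finType) (H : {set X} -> R).

Definition dep (a b : X) : bool := H [set a; b] < H [set a] + H [set b].

Definition subadditive : Prop :=
  forall A B : {set X}, A != set0 -> B != set0 -> [disjoint A & B] ->
    H (A :|: B) <= H A + H B.

(* a tour: a directed cyclic sequence listing every element of X once;
   successor = next p, predecessor = prev p *)
Definition tour (p : seq X) : bool := perm_eq p (enum X).

(* q is a (simple) subpath of the tour p all of whose edges have
   combinatorially dependent endpoints, i.e. a path of P minus the
   deleted (independent) edges *)
Definition seg (p q : seq X) : bool :=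
  if q is a :: s then
    uniq q && path (fun b c => (c == next p b) && dep b c) a s
  else false.

Definition maxseg (p q : seq X) : bool :=
  if q is a :: s then
    [&& seg p q, ~~ seg p (prev p a :: q) & ~~ seg p (rcons q (next p (last a s)))]
  else false.

Definition Sset (p : seq X) : {set {set X}} :=
  [set [set x in traject (next p) vm.1 (nat_of_ord vm.2).+1]
     | vm : X * 'I_#|X| & maxseg p (traject (next p) vm.1 (nat_of_ord vm.2).+1)].

Definition calH (p : seq X) : R := \sum_(B in Sset p) H B.

Definition edges (p : seq X) : seq {set X} := [seq [set a; next p a] | a <- p].

End Defs.

(* Main.v *)
Require Import Defs.
From HB Require Import structures.
From mathcomp Require Import all_boot all_order all_algebra.
From mathcomp Require Import zify.
Import Order.TTheory GRing.Theory Num.Theory.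
Local Open Scope ring_scope.
Set Implicit Arguments. Unset Strict Implicit. Unset Printing Implicit Defensive.

Section Generic.
Variables (R : realFieldType) (T : finType) (H : {set T} -> R).
Hypothesis sa : subadditive H.

Lemma subadd_cover (S : {set {set T}}) :
  trivIset S -> set0 \notin S -> S != set0 -> H (cover S) <= \sum_(B in S) H B.
Proof.
have [n] := ubnP #|S|; elim: n S => // n IH S hS tS nS S0.
have [B BS] := set0Pn _ S0.
rewrite /cover (big_setD1 B BS) [X in _ <= X](big_setD1 B BS) /=.
have [E|S'0] := eqVneq (S :\ B) set0.
  by rewrite E !big_set0 setU0 addr0.
have BS0 : B != set0 by apply: contraNneq nS => <-.
have hlt : (#|S :\ B| < n)%N by move: hS; rewrite (cardsD1 B S) BS.
have tS' : trivIset (S :\ B) by apply: trivIsetS tS; apply: subsetDl.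
have nS' : set0 \notin S :\ B by apply: contra nS; rewrite inE => /andP[].
have := IH _ hlt tS' nS' S'0; rewrite /cover => IH'.
have C0 : \bigcup_(i in S :\ B) i != set0.
  have [B' B'S] := set0Pn _ S'0.
  have B'0 : B' != set0 by apply: contraNneq nS' => <-.
  have [y yB'] := set0Pn _ B'0.
  by apply/set0Pn; exists y; apply/bigcupP; exists B'.
have dj : [disjoint B & \bigcup_(i in S :\ B) i].
  apply: bigcup_disjoint => i; rewrite !inE => /andP[iB iS].
  by move/trivIsetP: tS; apply => //; rewrite eq_sym.
apply: le_trans (sa BS0 C0 dj) _.
by rewrite lerD2l.
Qed.

Lemma refine_sum (P Q : {set {set T}}) :
  partition P setT -> partition Q setT ->
  (forall B, B \in P -> forall x y, x \in B -> y \in B -> pblock Q x = pblock Q y) ->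
  \sum_(C in Q) H C <= \sum_(B in P) H B.
Proof.
move=> /and3P[/eqP cP tP nP] /and3P[/eqP cQ tQ nQ] ref.
pose g (B : {set T}) := if [pick x in B] is Some x then pblock Q x else set0.
have gE B x : B \in P -> x \in B -> g B = pblock Q x.
  move=> BP xB; rewrite /g; case: pickP => [y yB|/(_ x)]; last by rewrite xB.
  exact: ref BP y x yB xB.
have gQ : forall B, B \in P -> g B \in Q.
  move=> B BP; have B0 : B != set0 by apply: contraNneq nP => <-.
  have [x xB] := set0Pn _ B0.
  by rewrite (gE B x BP xB) pblock_mem // cQ inE.
rewrite (partition_big g (fun C => C \in Q) gQ) /=.
apply: ler_sum => C CQ.
pose S := [set B in P | g B == C].
have -> : \sum_(i | (i \in P) && (g i == C)) H i = \sum_(i in S) H i.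
  by apply: eq_bigl => i; rewrite inE.
have eC : cover S = C.
  apply/setP => x; apply/bigcupP/idP.
    case=> B; rewrite inE => /andP[BP /eqP gB] xB.
    rewrite -gB (gE B x BP xB) mem_pblock cQ inE //.
  move=> xC; exists (pblock P x); last by rewrite mem_pblock cP inE.
  have BP : pblock P x \in P by rewrite pblock_mem // cP inE.
  rewrite inE BP /= (gE _ x BP) ?mem_pblock ?cP ?inE //.
  by rewrite (def_pblock tQ CQ xC).
have C0 : C != set0 by apply: contraNneq nQ => <-.
have S0 : S != set0.
  have [x xC] := set0Pn _ C0; apply/set0Pn; exists (pblock P x).
  have BP : pblock P x \in P by rewrite pblock_mem // cP inE.
  rewrite inE BP /= (gE _ x BP) ?mem_pblock ?cP ?inE //.
  by rewrite (def_pblock tQ CQ xC).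
have tS : trivIset S by apply: trivIsetS tP; apply/subsetP => B; rewrite inE => /andP[].
have nS : set0 \notin S by apply: contra nP; rewrite inE => /andP[].
by have := subadd_cover tS nS S0; rewrite eC.
Qed.
End Generic.
Section Tour.
Variables (R : realFieldType) (X : finType) (H : {set X} -> R).
Variable p : seq X.
Hypothesis tp : tour p.

Local Notation f := (next p).
Local Notation srel := (fun b c => (c == next p b) && dep H b c).

Lemma uniq_p : uniq p. Proof. by rewrite (perm_uniq tp) enum_uniq. Qed.
Lemma mem_p x : x \in p. Proof. by rewrite (perm_mem tp) mem_enum. Qed.
Lemma size_p : size p = #|X|. Proof. by rewrite (perm_size tp) cardE. Qed.
Lemma f_inj : injective f. Proof. exact: can_inj (prev_next uniq_p). Qed.
Lemma fcyc : fcycle f p. Proof. exact: cycle_next uniq_p. Qed.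

Lemma order_n a : order f a = #|X|.
Proof. by rewrite (order_cycle fcyc uniq_p (mem_p a)) size_p. Qed.

Lemma traj_uniq a : uniq (traject f a #|X|).
Proof. by have := orbit_uniq f a; rewrite /orbit order_n. Qed.

Lemma in_traj a y : y \in traject f a #|X|.
Proof.
by rewrite -(order_n a) -fconnect_orbit (fconnect_cycle fcyc (mem_p a)) mem_p.
Qed.

Lemma iter_eq a i j : (i < #|X|)%N -> (j < #|X|)%N -> iter i f a = iter j f a -> i = j.
Proof.
move=> hi hj e; apply/eqP; rewrite -(nth_uniq a _ _ (traj_uniq a)) ?size_traject //.
by rewrite !nth_traject // e.
Qed.

Lemma iter_inj k : injective (iter k f).
Proof. by elim: k => [|k IH] x y //= /f_inj /IH. Qed.

Lemma path_traj a k : path srel a (traject f (f a) k) ->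
  forall i, (i < k)%N -> dep H (iter i f a) (f (iter i f a)).
Proof.
elim: k a => [|k IH] a //= /andP[/andP[_ d] pa] [|i] hi //.
move: (IH _ pa i hi); by rewrite -!iterSr.
Qed.

Lemma seg_dep a k : seg H p (traject f a k.+1) ->
  forall i, (i < k)%N -> dep H (iter i f a) (f (iter i f a)).
Proof. by move=> /andP[_]; exact: path_traj. Qed.

Lemma seg_small a k : seg H p (traject f a k.+1) -> (k < #|X|)%N.
Proof.
move=> /andP[u _]; have := max_card (mem (traject f a k.+1)).
by rewrite (card_uniqP u) size_traject.
Qed.

Lemma ms_seg a k : maxseg H p (traject f a k.+1) -> seg H p (traject f a k.+1).
Proof. by case/and3P. Qed.

Lemma in_next a k y : maxseg H p (traject f a k.+1) -> y \in traject f a k.+1 ->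
  dep H y (f y) -> f y \in traject f a k.+1.
Proof.
move=> /and3P[sq _ nq] /trajectP[i hi ->] d.
have [lt|ge] := ltnP i k.
  by apply/trajectP; exists i.+1.
have ei : i = k by lia.
subst i; apply: contraNT nq => nin.
rewrite last_traject.
set s := traject f (f a) k.
have -> : seg H p (rcons (a :: s) (f (iter k f a))) =
   uniq (rcons (a :: s) (f (iter k f a))) && path srel a (rcons s (f (iter k f a))) by [].
move: sq => /andP[u ps].
by rewrite rcons_uniq nin u rcons_path ps /= last_traject eqxx d.
Qed.

Lemma in_prev a k : maxseg H p (traject f a k.+1) -> dep H (prev p a) a ->
  prev p a \in traject f a k.+1.
Proof.
move=> /and3P[sq np _] d; apply: contraNT np => nin.
move: sq => /andP[u ps].
have -> : seg H p (prev p a :: traject f a k.+1) =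
   uniq (prev p a :: traject f a k.+1) && path srel (prev p a) (traject f a k.+1) by [].
by rewrite cons_uniq nin u /= (next_prev uniq_p) eqxx d ps.
Qed.

Lemma M1a a k : (k.+1 < #|X|)%N -> maxseg H p (traject f a k.+1) -> ~~ dep H (prev p a) a.
Proof.
move=> hk ms; apply/negP => d; have /trajectP[t ht e] := in_prev ms d.
have e2 : iter t.+1 f a = iter 0 f a by rewrite iterS -e (next_prev uniq_p).
have := iter_eq _ _ e2; lia.
Qed.

Lemma M1b a k : (k.+1 < #|X|)%N -> maxseg H p (traject f a k.+1) ->
  ~~ dep H (iter k f a) (f (iter k f a)).
Proof.
move=> hk ms; apply/negP => d.
have yin : iter k f a \in traject f a k.+1 by apply/trajectP; exists k.
have /trajectP[t ht e] := in_next ms yin d.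
have e2 : iter k.+1 f a = iter t f a by rewrite iterS e.
have := iter_eq _ _ e2; lia.
Qed.

Lemma Lfull a k b m : k.+1 = #|X| -> (m.+1 < #|X|)%N -> seg H p (traject f a k.+1) ->
  maxseg H p (traject f b m.+1) -> False.
Proof.
move=> hk hm sa mb; have da := seg_dep sa.
have /trajectP[s hs eb] := in_traj a b.
case: s hs eb => [|s] hs eb.
  subst b; move/negP: (M1b hm mb); apply; apply: da; lia.
move/negP: (M1a hm mb); apply; rewrite eb iterS (prev_next uniq_p); apply: da; lia.
Qed.

Lemma Lstart a k b m i j : (k.+1 < #|X|)%N -> maxseg H p (traject f a k.+1) ->
  seg H p (traject f b m.+1) -> (i <= j)%N -> (j <= m)%N ->
  iter i f a = iter j f b -> a = b.
Proof.
move=> hk ma sb hij hjm e.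
have e' : iter j f b = iter i f (iter (j - i) f b) by rewrite -iterD addnC subnK.
rewrite e' in e; move/iter_inj: e => ea.
case E: (j - i)%N ea => [|d] ea; first by [].
exfalso; move/negP: (M1a hk ma); apply; rewrite ea iterS (prev_next uniq_p).
apply: (seg_dep sb); lia.
Qed.

Lemma Lend a k m : (k.+1 < #|X|)%N -> maxseg H p (traject f a k.+1) ->
  seg H p (traject f a m.+1) -> (k < m)%N -> False.
Proof.
move=> hk ma sb hkm; move/negP: (M1b hk ma); apply; exact: (seg_dep sb).
Qed.

Lemma L2 a k b m x : maxseg H p (traject f a k.+1) -> maxseg H p (traject f b m.+1) ->
  x \in traject f a k.+1 -> x \in traject f b m.+1 ->
  [set y in traject f a k.+1] = [set y in traject f b m.+1].
Proof.
move=> ma mb xa xb.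
have sa := ms_seg ma; have sb := ms_seg mb.
have ka := seg_small sa; have kb := seg_small sb.
have [hk|hk] : k.+1 = #|X| \/ (k.+1 < #|X|)%N by lia.
  have [hm|hm] : m.+1 = #|X| \/ (m.+1 < #|X|)%N by lia.
    by apply/setP => y; rewrite !in_set hk hm !in_traj.
  by case: (Lfull hk hm sa mb).
have [hm|hm] : m.+1 = #|X| \/ (m.+1 < #|X|)%N by lia.
  by case: (Lfull hm hk sb ma).
move/trajectP: xa => [i hi ei]; move/trajectP: xb => [j hj ej].
have eab : a = b.
  have [hij|hji] := leqP i j.
    by apply: (Lstart hk ma sb hij); [lia | rewrite -ei -ej].
  apply/esym; apply: (Lstart hm mb sa (i := j) (j := i)); [lia | lia | rewrite -ei -ej //].
subst b.
have [hkm|hmk|->] := ltngtP k m; last by [].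
  by case: (Lend hk ma sb hkm).
by case: (Lend hm mb sa hmk).
Qed.

Lemma seg_traj q : seg H p q -> exists a k, q = traject f a k.+1.
Proof.
case: q => // a s /andP[_ ps]; exists a, (size s).
have fp : fpath f a s.
  by apply: sub_path ps => x y /andP[/eqP -> _] /=.
by rewrite {1}(fpathE fp).
Qed.

Lemma Sset_in B : B \in Sset H p ->
  exists a k, maxseg H p (traject f a k.+1) /\ B = [set y in traject f a k.+1].
Proof.
case/imsetP => -[v m]; rewrite inE /= => ms ->; by exists v, m.
Qed.

Lemma in_Sset a k : maxseg H p (traject f a k.+1) -> [set y in traject f a k.+1] \in Sset H p.
Proof.
move=> ms; have hk := seg_small (ms_seg ms).
apply/imsetP; exists (a, Ordinal hk) => //; by rewrite inE.
Qed.

Lemma cover_S x : exists a k, maxseg H p (traject f a k.+1) /\ x \in traject f a k.+1.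
Proof.
pose P m := (m < #|X|)%N && [exists v, seg H p (traject f v m.+1) && (x \in traject f v m.+1)].
have P0 : exists m, P m.
  exists 0%N; rewrite /P; apply/andP; split.
    by apply/card_gt0P; exists x.
  apply/existsP; exists x; by rewrite /seg /= mem_head.
have ub : forall m, P m -> (m <= #|X|)%N by move=> m /andP[h _]; lia.
case: (ex_maxnP P0 ub) => m /andP[hm /existsP[v /andP[sv xv]]] mx.
exists v, m; split => //.
apply/and3P; split => //.
  apply/negP => sp.
  have e : prev p v :: traject f v m.+1 = traject f (prev p v) m.+2.
    by rewrite [RHS]/= (next_prev uniq_p).
  rewrite e in sp; have := seg_small sp => hs.
  have : P m.+1.
    apply/andP; split => //; apply/existsP; exists (prev p v).
    by rewrite sp -e inE xv orbT.
  by move/mx; rewrite ltnn.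
apply/negP => sp.
have e : rcons (traject f v m.+1) (f (last v (traject f (f v) m))) = traject f v m.+2.
  by rewrite last_traject [RHS]trajectSr.
have sp2 : seg H p (traject f v m.+2) by rewrite -e; exact: sp.
have := seg_small sp2 => hs.
have : P m.+1.
  apply/andP; split => //; apply/existsP; exists v.
  by rewrite sp2 -e mem_rcons in_cons xv orbT.
by move/mx; rewrite ltnn.
Qed.

Lemma part_S : partition (Sset H p) setT.
Proof.
apply/and3P; split.
- apply/eqP/setP => x; rewrite inE; apply/bigcupP.
  have [a [k [ms xin]]] := cover_S x.
  by exists [set y in traject f a k.+1]; [exact: in_Sset | rewrite inE].
- apply/trivIsetP => A B /Sset_in[a [k [ma ->]]] /Sset_in[b [m [mb ->]]] ne.
  apply/pred0P => y /=; apply/negP => /andP[]; rewrite !inE => ya yb.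
  by move/eqP: ne; apply; apply: (L2 ma mb ya yb).
- apply/negP => /Sset_in[a [k [_ /setP e]]].
  by have := e a; rewrite in_set0 in_set /= mem_head.
Qed.

Lemma pblock_next y : dep H y (f y) -> pblock (Sset H p) (f y) = pblock (Sset H p) y.
Proof.
move=> d; have /and3P[/eqP cP tP _] := part_S.
have [a [k [ms yin]]] := cover_S y.
have yB : y \in [set z in traject f a k.+1] by rewrite inE.
have fyB : f y \in [set z in traject f a k.+1] by rewrite inE; exact: in_next ms yin d.
by rewrite (def_pblock tP (in_Sset ms) yB) (def_pblock tP (in_Sset ms) fyB).
Qed.

End Tour.

Lemma pair_eq (T : finType) (a b c d : T) :
  [set a; b] = [set c; d] -> (a = c /\ b = d) \/ (a = d /\ b = c).
Proof.
move=> E.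
have ha : a \in [set c; d] by rewrite -E set21.
have hb : b \in [set c; d] by rewrite -E set22.
have hc : c \in [set a; b] by rewrite E set21.
have hd : d \in [set a; b] by rewrite E set22.
move: ha hb hc hd; rewrite !in_set2.
case: (eqVneq a c) => [<-|ac] ha hb hc hd.
  left; split=> //; case/orP: hb => /eqP // eb; subst b.
  by move: hd; rewrite orbb => /eqP ->.
right; split.
  by move: ha => /= /eqP.
by move: hc => /= /eqP.
Qed.

Lemma dep_pair (R : realFieldType) (T : finType) (H : {set T} -> R) (a b c d : T) :
  [set a; b] = [set c; d] -> dep H a b = dep H c d.
Proof.
move=> E; rewrite /dep E.
by case: (pair_eq E) => -[-> ->] //; rewrite addrC.
Qed.

Theorem mainTheorem4 (R : realFieldType) (X : finType) (H : {set X} -> R)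
    (p p' : seq X) (u0 : X) (s1 : seq X) (v0 : X) (s2 : seq X) :
  subadditive H ->
  tour p ->
  maxseg H p (u0 :: s1) ->
  maxseg H p (v0 :: s2) ->
  [set x in u0 :: s1] != [set x in v0 :: s2] ->
  dep H (last u0 s1) v0 ->
  tour p' ->
  (exists rest : seq {set X},
     perm_eq (edges p)
       ([set last u0 s1; next p (last u0 s1)]
        :: [set prev p v0; v0]
        :: [set last v0 s2; next p (last v0 s2)] :: rest)
     /\ perm_eq (edges p')
       ([set last u0 s1; v0]
        :: [set last v0 s2; next p (last u0 s1)]
        :: [set prev p v0; next p (last v0 s2)] :: rest)) ->
  calH H p' <= calH H p.
Proof.
move=> sa tp ms_u ms_v neq duv tp' [rest [Ep Ep']].
have su : seg H p (u0 :: s1) by case/and3P: ms_u.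
have sv : seg H p (v0 :: s2) by case/and3P: ms_v.
have [a [k eu]] := seg_traj su.
case: eu => ea es; subst a s1.
have [b [m ev]] := seg_traj sv.
case: ev => eb es; subst b s2.
have hk0 := seg_small su; have hm0 := seg_small sv.
have hk : (k.+1 < #|X|)%N.
  have [//|hk] : (k.+1 < #|X|)%N \/ k.+1 = #|X| by lia.
  have h1 : v0 \in traject (next p) u0 k.+1 by rewrite hk in_traj.
  have h2 : v0 \in traject (next p) v0 m.+1 by rewrite mem_head.
  by move/eqP: neq; case; apply: (L2 tp ms_u ms_v h1 h2).
have hm : (m.+1 < #|X|)%N.
  have [//|hm] : (m.+1 < #|X|)%N \/ m.+1 = #|X| by lia.
  have h1 : u0 \in traject (next p) v0 m.+1 by rewrite hm in_traj.
  have h2 : u0 \in traject (next p) u0 k.+1 by rewrite mem_head.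
  by move/eqP: neq; case; apply: (L2 tp ms_u ms_v h2 h1).
have n1 := M1b tp hk ms_u.
have n2 := M1a tp hm ms_v.
have n3 := M1b tp hm ms_v.
rewrite !last_traject in Ep Ep'.
have tr : forall y, dep H y (next p y) ->
    pblock (Sset H p') (next p y) = pblock (Sset H p') y.
  move=> y d.
  have : [set y; next p y] \in edges p by apply/mapP; exists y => //; exact: mem_p tp y.
  rewrite (perm_mem Ep) !in_cons => /or4P[/eqP E|/eqP E|/eqP E|Hr].
  - by move: n1; rewrite -(dep_pair H E) d.
  - by move: n2; rewrite -(dep_pair H E) d.
  - by move: n3; rewrite -(dep_pair H E) d.
  have : [set y; next p y] \in edges p' by rewrite (perm_mem Ep') !in_cons Hr !orbT.
  case/mapP => z _ Ez.
  have dz : dep H z (next p' z) by rewrite -(dep_pair H Ez).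
  have := pblock_next tp' dz.
  by case: (pair_eq Ez) => -[-> ->] ->.
rewrite /calH.
have PP := @part_S R X H p tp.
have PQ := @part_S R X H p' tp'.
apply: (refine_sum sa PP PQ).
move=> B /Sset_in [a [k' [ms ->]]] x y.
have sb := ms_seg ms; have da := seg_dep sb.
have allp : forall i, (i <= k')%N ->
    pblock (Sset H p') (iter i (next p) a) = pblock (Sset H p') a.
  elim=> [|i IH] hi //.
  have hi' : (i <= k')%N := ltnW hi.
  by rewrite iterS (tr _ (da i hi)) (IH hi').
rewrite !in_set => /trajectP[i hi ->] /trajectP[j hj ->].
by rewrite (allp i hi) (allp j hj).
Qed.
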